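(* Let $k$ be a positive integer and $\mathbf a\in\mathscr S_k$. Then: (i) if $\mathcal s(\mathbf a)\ge0$ and $\epsilon$ is a real number with $0\le\epsilon\le\mathcal s(\mathbf a)$, then for every positive integer $m\le k$ the matrix $\mathbf a-\epsilon\mathbf e_m$ is formally positive semi-definite; (ii) if $\mathcal s(\mathbf a)\ge0$, then $\mathbf a$ is formally positive semi-definite; (iii) if $\mathcal s(\mathbf a)>0$, then for every positive integer $m$ there exists $\epsilon_m>0$ such that $\mathcal s(\mathbf a-\epsilon_m\mathbf e_m)>0$, and in this case $\mathbf a-\epsilon_m\mathbf e_m$ is formally positive semi-definite.
   Context: Class $\mathscr S_k$: given a $k\times k$ complex matrix $\mathbf b$, complex numbers $c_{k+1},c_{k+2},\dots$ and positive reals $d_{k+1},d_{k+2},\dots$, let $\mathbf a=(a_{m,n})_{m,n\ge1}=\begin{pmatrix}\mathbf b&\mathbf c\\\mathbf c^*&\mathbf d\end{pmatrix}$, where $\mathbf c$ is the $k\times\infty$ matrix all of whose rows equal $(c_{k+1},c_{k+2},\dots)$ and $\mathbf d=\mathrm{diag}(d_{k+1},d_{k+2},\dots)$. Then $\mathbf a\in\mathscr S_k$ if $\mathbf b$ is positive semi-definite and $\sum_{l\ge1}|c_{k+l}|^2/d_{k+l}<\infty$, and $\mathcal s(\mathbf a)=\lambda_{\min}(\mathbf b)-k\sum_{l\ge1}|c_{k+l}|^2/d_{k+l}$, where $\lambda_{\min}$ is the minimal eigenvalue (for a matrix of the same block form, $\mathcal s$ is defined by the same formula). $\mathbf e_m$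 is the infinite matrix with entry $1$ at position $(m,m)$ and $0$ elsewhere. An infinite matrix is formally positive semi-definite if all its finite sections $(x_{p,q})_{p,q\in F}$, $F\subset\mathbb N$ finite, are positive semi-definite. *)

(* Defs.v *)
From HB Require Import structures.
From mathcomp Require Import all_boot all_order all_algebra.
From mathcomp Require Import all_classical all_reals all_analysis.
From mathcomp Require Import complex.
Set Implicit Arguments. Unset Strict Implicit. Unset Printing Implicit Defensive.
Import Order.TTheory GRing.Theory Num.Theory numFieldNormedType.Exports.
Local Open Scope ring_scope.
Local Open Scope complex_scope.

Section Defs.
Variable R : realType.
Local Notation C := R[i].

(* Infinite matrices, indexed by positive integers (1-based, as in the
   paper); the entries at index 0 are irrelevant and set to 0 below. *)
Definition infmx := nat -> nat -> C.

Definition bentry (k : nat) (b : 'M[C]_k) (p q : nat) : C :=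
  match (insub p.-1 : option 'I_k), (insub q.-1 : option 'I_k) with
  | Some i, Some j => b i j
  | _, _ => 0
  end.

(* The block matrix  ( b  c ; c^*  d ).  c n = c_n and d n = d_n for n > k. *)
Definition blockmx (k : nat) (b : 'M[C]_k) (c : nat -> C) (d : nat -> R) : infmx :=
  fun p q =>
    if (p == 0%N) || (q == 0%N) then 0
    else if (p <= k)%N then
      (if (q <= k)%N then bentry b p q else c q)
    else if (q <= k)%N then (c p)^*
    else if p == q then (d p)%:C else 0.

Definition emx (m : nat) : infmx :=
  fun p q => if (p == m) && (q == m) then 1 else 0.

Definition mx_sub (x y : infmx) : infmx := fun p q => x p q - y p q.
Definition mx_scale (e : R) (x : infmx) : infmx := fun p q => e%:C * x p q.

(* positive semi-definite complex square matrix: v^* A v >= 0 for all v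
   (in the partial order of C, i.e. real and nonnegative) *)
Definition psd_mx (n : nat) (A : 'M[C]_n) : Prop :=
  forall v : 'cV[C]_n, 0 <= ((map_mx conjc v)^T *m A *m v) 0 0.

(* the finite section of x on F (F a duplicate-free list of positive
   integers, listing a finite subset of N) *)
Definition section (x : infmx) (F : seq nat) : 'M[C]_(size F) :=
  \matrix_(i < size F, j < size F) x (nth 0%N F i) (nth 0%N F j).

Definition formally_psd (x : infmx) : Prop :=
  forall F : seq nat, uniq F -> all (fun p => 0 < p)%N F -> psd_mx (section x F).

(* minimal eigenvalue (of a Hermitian matrix, all eigenvalues being real) *)
Definition lambda_min (k : nat) (b : 'M[C]_k) : R :=
  inf [set r : R | eigenvalue b r%:C].

(* the sequence l |-> |c_{k+l}|^2 / d_{k+l}, l >= 1 (shifted to start at 0) *)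
Definition cd_seq (k : nat) (c : nat -> C) (d : nat -> R) : nat -> R :=
  fun l => (ComplexField.Normc.normc (c (k + l.+1)%N)) ^+ 2 / d (k + l.+1)%N.

Definition cd_sum (k : nat) (c : nat -> C) (d : nat -> R) : R :=
  limn (series (cd_seq k c d)).

Definition block_data (k : nat) (b : 'M[C]_k) (c : nat -> C) (d : nat -> R) : Prop :=
  (forall n, (k < n)%N -> 0 < d n) /\ cvgn (series (cd_seq k c d)).

Definition in_S (k : nat) (b : 'M[C]_k) (c : nat -> C) (d : nat -> R) : Prop :=
  psd_mx b /\ block_data b c d.

Definition sval_s (k : nat) (b : 'M[C]_k) (c : nat -> C) (d : nat -> R) : R :=
  lambda_min b - k%:R * cd_sum k c d.

End Defs.
Arguments emx {R} m _ _.

(* Main.v *)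
Require Import Defs.
From HB Require Import structures.
From mathcomp Require Import all_boot all_order all_algebra.
From mathcomp Require Import all_classical all_reals all_analysis.
From mathcomp Require Import complex.
From mathcomp Require Import ring lra zify.
Import Order.TTheory GRing.Theory Num.Theory numFieldNormedType.Exports.
Set Implicit Arguments. Unset Strict Implicit. Unset Printing Implicit Defensive.

Section L.
Local Open Scope ring_scope.
Local Open Scope complex_scope.
Variable R : realType.
Local Notation C := R[i].
Local Notation cj := (@conjc R).

Definition qf n (A : 'M[C]_n) (v : 'cV[C]_n) := ((map_mx cj v)^T *m A *m v) 0 0.
Definition ns n (v : 'cV[C]_n) := ((map_mx cj v)^T *m v) 0 0.

Lemma qfE n (A : 'M[C]_n) v :
  qf A v = \sum_i \sum_j cj (v i 0) * A i j * v j 0.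
Proof.
rewrite /qf mxE; under eq_bigr do rewrite mxE big_distrl /=.
rewrite exchange_big /=; apply: eq_bigr => i _; apply: eq_bigr => j _.
by rewrite !mxE.
Qed.

Lemma nsE n (v : 'cV[C]_n) : ns v = \sum_i cj (v i 0) * v i 0.
Proof. by rewrite /ns mxE; apply: eq_bigr => i _; rewrite !mxE. Qed.

Lemma cjx_ge0 (x : C) : 0 <= cj x * x.
Proof. by rewrite mulrC; apply: mulcJ_ge0. Qed.

Lemma ns_ge0 n (v : 'cV[C]_n) : 0 <= ns v.
Proof. by rewrite nsE; apply: sumr_ge0 => i _; apply: cjx_ge0. Qed.

Lemma cjx_eq0 (x : C) : (cj x * x == 0) = (x == 0).
Proof. by rewrite mulf_eq0 conjc_eq0 orbb. Qed.


Lemma cjK_mx m n (x : 'M[C]_(m,n)) : map_mx cj (map_mx cj x) = x.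
Proof. by apply/matrixP => i j; rewrite !mxE conjcK. Qed.

Lemma eig_qf n (H : 'M[C]_n) (x : 'rV[C]_n) a : x *m H = a *: x ->
  qf H (map_mx cj x)^T = a * ns (map_mx cj x)^T.
Proof.
move=> Hx; rewrite /qf /ns -map_trmx cjK_mx trmxK Hx -scalemxAl mxE.
by [].
Qed.

Lemma ns_gt0_row n (x : 'rV[C]_n) : x != 0 -> 0 < ns (map_mx cj x)^T.
Proof.
move=> x0; rewrite lt_def ns_ge0 andbT; apply: contra x0 => /eqP.
rewrite nsE => /eqP; rewrite psumr_eq0 => [/allP h|i _]; last exact: cjx_ge0.
apply/eqP/rowP => j; have := h j (mem_index_enum _).
rewrite !mxE conjcK mulrC cjx_eq0 => /eqP. done.
Qed.

Lemma eig_ge n (H : 'M[C]_n) mu a : (forall v, mu%:C * ns v <= qf H v) ->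
  eigenvalue H a -> mu%:C <= a.
Proof.
move=> hq /eigenvalueP [x Hx x0]; have := hq (map_mx cj x)^T.
rewrite (eig_qf Hx) -subr_ge0 -mulrBl pmulr_lge0 ?ns_gt0_row //.
by rewrite subr_ge0.
Qed.

Lemma lam_lb n (H : 'M[C]_n.+1) mu : (forall v, mu%:C * ns v <= qf H v) ->
  mu <= lambda_min H.
Proof.
move=> hq; rewrite /lambda_min; apply: lb_le_inf.
  have [a ea] := @eigenvalue_closed C _ H (ltn0Sn n).
  have := eig_ge hq ea; rewrite lecE /= => /andP [/eqP ha _].
  exists (complex.Re a) => /=; suff -> : (complex.Re a)%:C = a by [].
  by case: a ea ha => ar ai /= _ ->.
move=> r /= er; have := eig_ge hq er; by rewrite lecR.
Qed.


Section Herm.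
Variables (n : nat) (b : 'M[C]_n).
Definition bl (u w : 'cV[C]_n) := ((map_mx cj u)^T *m b *m w) 0 0.

Lemma blDl u1 u2 w : bl (u1 + u2) w = bl u1 w + bl u2 w.
Proof.
rewrite /bl (_ : map_mx cj (u1 + u2) = map_mx cj u1 + map_mx cj u2).
  by rewrite linearD /= !mulmxDl mxE.
by apply/matrixP => a c; rewrite !mxE rmorphD.
Qed.

Lemma blDr u w1 w2 : bl u (w1 + w2) = bl u w1 + bl u w2.
Proof. by rewrite /bl mulmxDr mxE. Qed.

Lemma blZl z u w : bl (z *: u) w = cj z * bl u w.
Proof.
rewrite /bl (_ : map_mx cj (z *: u) = cj z *: map_mx cj u).
  by rewrite linearZ /= -!scalemxAl mxE.
by apply/matrixP => a c; rewrite !mxE rmorphM.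
Qed.

Lemma blZr z u w : bl u (z *: w) = z * bl u w.
Proof. by rewrite /bl -!scalemxAr mxE. Qed.

Lemma bl_delta i j : bl (delta_mx i 0) (delta_mx j 0) = b i j.
Proof.
rewrite /bl (_ : map_mx cj (delta_mx i 0) = delta_mx i 0).
  by rewrite trmx_delta -rowE -colE !mxE.
by apply/matrixP => a c; rewrite !mxE conjc_nat.
Qed.

Lemma psd_herm : psd_mx b -> b \is hermsymmx.
Proof.
move=> hb; apply/is_hermitianmxP; rewrite expr0 scale1r.
apply/matrixP => i j; rewrite !mxE.
have rq : forall v, bl v v \is Num.real by move=> v; apply: ger0_real; apply: hb.
have h1 := rq (delta_mx i 0 + delta_mx j 0).
have h2 := rq (delta_mx i 0 + 'i *: delta_mx j 0).
have h3 := rq (delta_mx i 0); have h4 := rq (delta_mx j 0).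
move: h1 h2 h3 h4; rewrite !(blDl, blDr, blZl, blZr, bl_delta).
change (Num.conj_op (b j i)) with (cj (b j i)).
case: (b i j) => xa xb; case: (b j i) => ya yb; case: (b i i) => za zb;
case: (b j j) => wa wb.
rewrite /= !complex_real.
move=> /eqP h1 /eqP h2 /eqP h3 /eqP h4; congr (_ +i* _); lra.
Qed.
End Herm.


Lemma rayleigh n (b : 'M[C]_n) : psd_mx b ->
  forall v, (lambda_min b)%:C * ns v <= qf b v.
Proof.
move=> hb v.
have herm := psd_herm hb.
have /orthomx_spectralP bE := hermitian_normalmx herm.
set P := spectralmx b in bE; set D := spectral_diag b in bE.
have Pu : P \is unitarymx := spectral_unitarymx b.
have Pinv : invmx P = (map_mx cj P)^T by rewrite (invmx_unitary Pu) map_trmx.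
have PU : P \in unitmx := unitarymx_unit Pu.
have Dr : forall i, D 0 i = (complex.Re (D 0 i))%:C.
  move=> i; have /mxOverP/(_ 0 i) := hermitian_spectral_diag_real herm.
  by case: (D 0 i) => a b0 /=; rewrite complex_real => /eqP ->.
have eigD : forall i, eigenvalue b (D 0 i).
  move=> i; apply/eigenvalueP; exists (row i P).
    rewrite -row_mul bE !mulmxA mulmxV // mul1mx mul_diag_mx.
    by apply/rowP => j; rewrite !mxE.
  apply/negP => /eqP h0; have := congr1 (fun M => M *m invmx P) h0.
  rewrite -row_mul mulmxV // mul0mx => /rowP /(_ i); rewrite !mxE eqxx /=.
  by apply/eqP; exact: oner_neq0.
have lb : forall i, lambda_min b <= complex.Re (D 0 i).
  move=> i; apply: ge_inf.
    exists 0 => r /= er.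
    have := @eig_ge _ b 0 r%:C _ er; rewrite lecR; apply => w.
    by rewrite mul0r; apply: hb.
  by rewrite /= -Dr.
set u := P *m v.
have -> : qf b v = qf (diag_mx D) u.
  by rewrite /qf /u bE map_mxM trmx_mul Pinv !mulmxA.
have -> : ns v = ns u.
  by rewrite /ns /u map_mxM trmx_mul -mulmxA (mulmxA _ P) -Pinv mulVmx // mul1mx.
rewrite /qf mul_mx_diag nsE mxE mulr_sumr; apply: ler_sum => j _.
rewrite !mxE (Dr j) mulrAC [in X in _ <= X]mulrC.
apply: ler_wpM2r; first exact: cjx_ge0.
by rewrite lecR.
Qed.

End L.

Section L2.
Local Open Scope ring_scope.
Local Open Scope complex_scope.
Variable R : realType.
Local Notation C := R[i].
Local Notation cj := (@conjc R).

Lemma bentryE K (b : 'M[C]_K.+1) p q : (0 < p <= K.+1)%N -> (0 < q <= K.+1)%N ->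
  bentry b p q = b (inord p.-1) (inord q.-1).
Proof.
move=> /andP [p0 pK] /andP [q0 qK]; rewrite /bentry.
case: insubP => [i _ ei|/negP []]; last by rewrite prednK.
case: insubP => [j _ ej|/negP []]; last by rewrite prednK.
congr (b _ _); apply: val_inj; rewrite /= inordK ?ei ?ej //; by rewrite prednK.
Qed.

Lemma normc_sq (x : C) : x * cj x = ((ComplexField.Normc.normc x) ^+ 2)%:C.
Proof.
case: x => a b /=; rewrite sqr_sqrtr; last by rewrite addr_ge0 // sqr_ge0.
by congr (_ +i* _); rewrite /=; ring.
Qed.

Lemma cs_ineq K (x : 'I_K.+1 -> C) :
  cj (\sum_p x p) * (\sum_p x p) <= K.+1%:R * \sum_p cj (x p) * x p.
Proof.
set S := \sum_p x p; set m := S / K.+1%:R.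
have K0 : (K.+1%:R : C) != 0 by rewrite pnatr_eq0.
have h : 0 <= \sum_p cj (x p - m) * (x p - m).
  by apply: sumr_ge0 => p _; apply: cjx_ge0.
have e : \sum_p cj (x p - m) * (x p - m) =
    \sum_p cj (x p) * x p - cj S * S / K.+1%:R.
  under eq_bigr do rewrite rmorphB mulrBl !mulrBr.
  rewrite !sumrB -!mulr_suml -!mulr_sumr sumr_const card_ord -rmorph_sum.
  rewrite -/S /m fmorph_div rmorph_nat /=; field; done.
by move: h; rewrite e subr_ge0 ler_pdivrMr ?ltr0n // [X in _ <= X]mulrC.
Qed.


Definition gq (c : nat -> C) (d : nat -> R) q := (ComplexField.Normc.normc (c q)) ^+ 2 / d q.

Lemma gs_le K (c : nat -> C) (d : nat -> R) (F : seq nat) :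
  (forall n, (K < n)%N -> 0 < d n) -> cvgn (series (cd_seq K c d)) -> uniq F ->
  \sum_(i < size F | (K < nth 0%N F i)%N) gq c d (nth 0%N F i) <= cd_sum K c d.
Proof.
move=> hd hcv uF.
have g0 : forall q, (K < q)%N -> 0 <= gq c d q.
  by move=> q hq; rewrite /gq divr_ge0 ?sqr_ge0 //; apply/ltW/hd.
rewrite -(big_mkord (fun i => K < nth 0 F i)%N (fun i => gq c d (nth 0 F i))).
rewrite -(big_nth 0%N) -big_filter.
set s := seq.filter _ F; set N := (\big[maxn/0%N]_(q <- F) q)%N.
have sub : \sum_(q <- s) gq c d q <= \sum_(q <- iota K.+1 N) gq c d q.
  have pe : perm_eq s [seq q <- iota K.+1 N | q \in s].
    apply: uniq_perm; [exact: filter_uniq | exact/filter_uniq/iota_uniq|].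
    move=> q; rewrite mem_filter andbC; case qs: (q \in s); last by rewrite andbF.
    move: qs; rewrite mem_filter => /andP [Kq qF]; rewrite mem_iota Kq /=.
    have := @leq_bigmax_seq _ F xpredT (fun q => q) q qF isT.
    by rewrite -/N andbT => h; symmetry; lia.
  rewrite (perm_big _ pe) big_filter big_mkcond /= big_seq [X in _ <= X]big_seq; apply: ler_sum => q.
  rewrite mem_iota => /andP [Kq _]; case: ifP => _ //; exact: g0.
apply: (le_trans sub).
have -> : \sum_(q <- iota K.+1 N) gq c d q = series (cd_seq K c d) N.
  rewrite /series /= -(addn0 K.+1) iotaDl big_map /index_iota subn0.
  by apply: eq_bigr => l _; rewrite /cd_seq /gq addSnnS.
apply: nondecreasing_cvgn_le => //; apply: nondecreasing_series => l _ _.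
by rewrite /cd_seq divr_ge0 ?sqr_ge0 //; apply/ltW/hd; lia.
Qed.

End L2.

Section L3.
Local Open Scope ring_scope.
Local Open Scope complex_scope.
Variable R : realType.
Local Notation C := R[i].
Local Notation cj := (@conjc R).

Lemma part n K (lo : pred 'I_n) (pi : 'I_n -> 'I_K) (h : 'I_n -> C) (G : 'I_K -> C) :
  \sum_(i | lo i) h i * G (pi i) = \sum_p (\sum_(i | lo i && (pi i == p)) h i) * G p.
Proof.
rewrite (partition_big pi xpredT) //=; apply: eq_bigr => p _.
by rewrite mulr_suml; apply: eq_bigr => i /andP [_ /eqP ->].
Qed.

Lemma cjD (x y : C) : cj (x + y) = cj x + cj y. Proof. exact: rmorphD. Qed.
Lemma cjM (x y : C) : cj (x * y) = cj x * cj y. Proof. exact: rmorphM. Qed.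
Lemma cjdiv (x y : C) : cj (x / y) = cj x / cj y. Proof. exact: fmorph_div. Qed.

Section Core.
Variables (K : nat) (b : 'M[C]_K.+1) (c : nat -> C) (d : nat -> R) (mu : R).
Hypotheses (hd : forall n, (K.+1 < n)%N -> 0 < d n)
  (hcv : cvgn (series (cd_seq K.+1 c d)))
  (hmu : K.+1%:R * cd_sum K.+1 c d <= mu)
  (hq : forall w, mu%:C * ns w <= qf b w).

Lemma core : formally_psd (blockmx b c d).
Proof.
move=> F uF pF v.
change (0 <= qf (section (blockmx b c d) F) v).
pose f (i : 'I_(size F)) := nth 0%N F i.
have fpos : forall i, (0 < f i)%N by move=> i; apply: (allP pF); exact: mem_nth.
pose lo i := (f i <= K.+1)%N.
pose pi i : 'I_K.+1 := inord (f i).-1.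
have ent : forall i j, section (blockmx b c d) F i j =
   if lo i then (if lo j then b (pi i) (pi j) else c (f j))
   else if lo j then cj (c (f i)) else (if i == j then (d (f i))%:C else 0).
  move=> i j; rewrite mxE /blockmx.
  have := fpos i; have := fpos j; rewrite /lo /pi /f => fj fi.
  rewrite (negbTE (lt0n_neq0 fi)) (negbTE (lt0n_neq0 fj)) /=.
  case: ifP => hi; case: ifP => hj //; first by rewrite bentryE ?fi ?fj.
  by rewrite nth_uniq.
rewrite qfE.
pose S := \sum_(i | lo i) v i 0.
pose Y := \sum_(j | ~~ lo j) c (f j) * v j 0.
pose w : 'cV_K.+1 := \col_p \sum_(i | lo i && (pi i == p)) v i 0.
pose D i := (d (f i))%:C.
have eQ : \sum_i \sum_j cj (v i 0) * section (blockmx b c d) F i j * v j 0 =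
   qf b w + (cj S * Y + (cj Y * S + \sum_(i | ~~ lo i) D i * (cj (v i 0) * v i 0))).
  rewrite (bigID lo) /=.
  rewrite [X in X + _](eq_bigr (fun i => \sum_(j | lo j) cj (v i 0) * b (pi i) (pi j) * v j 0
     + \sum_(j | ~~ lo j) cj (v i 0) * c (f j) * v j 0)); last first.
    move=> i hi; rewrite (bigID lo) /=; congr (_ + _); apply: eq_bigr => j hj;
    by rewrite ent hi ?hj ?(negbTE hj).
  rewrite [X in _ + X](eq_bigr (fun i => \sum_(j | lo j) cj (v i 0) * cj (c (f i)) * v j 0
     + \sum_(j | ~~ lo j) cj (v i 0) * (if i == j then D i else 0) * v j 0)); last first.
    move=> i hi; rewrite (bigID lo) /=; congr (_ + _); apply: eq_bigr => j hj;
    by rewrite ent (negbTE hi) ?hj ?(negbTE hj).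
  rewrite !big_split /= -!addrA; congr (_ + (_ + (_ + _))).
  - transitivity (\sum_(i | lo i) cj (v i 0) * \sum_q w q 0 * b (pi i) q).
      apply: eq_bigr => i _.
      rewrite (_ : \sum_q w q 0 * b (pi i) q = \sum_q (\sum_(j | lo j && (pi j == q)) v j 0) * b (pi i) q); last first.
        by apply: eq_bigr => q _; rewrite mxE.
      rewrite -(part lo pi (fun j => v j 0) (fun q => b (pi i) q)) mulr_sumr.
      by apply: eq_bigr => j _; rewrite -mulrA (mulrC (b _ _)).
    rewrite (part lo pi (fun i => cj (v i 0)) (fun p => \sum_q w q 0 * b p q)) qfE.
    apply: eq_bigr => p _; rewrite mxE rmorph_sum mulr_sumr; apply: eq_bigr => q _.
    by rewrite [w q 0 * _]mulrC mulrA.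
  - rewrite /S /Y rmorph_sum mulr_suml; apply: eq_bigr => i _.
    by rewrite mulr_sumr; apply: eq_bigr => j _; rewrite mulrA.
  - rewrite /S /Y rmorph_sum mulr_suml; apply: eq_bigr => i _.
    rewrite mulr_sumr; apply: eq_bigr => j _; rewrite rmorphM.
    by rewrite [cj (v i 0) * _]mulrC.
  - apply: eq_bigr => i hi; rewrite (bigD1 i) //= eqxx big1 ?addr0.
      by rewrite mulrAC mulrC.
    by move=> j /andP [_ hji]; rewrite eq_sym (negbTE hji) mulr0 mul0r.
rewrite eQ.
have dpos : forall i, ~~ lo i -> 0 < d (f i) by move=> i hi; apply: hd; rewrite ltnNge.
pose z i := v i 0 + cj (c (f i)) * S / D i.
pose G := \sum_(i | ~~ lo i) c (f i) * cj (c (f i)) / D i.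
have eS : cj S * Y + (cj Y * S + \sum_(i | ~~ lo i) D i * (cj (v i 0) * v i 0))
    = \sum_(i | ~~ lo i) D i * (cj (z i) * z i) - cj S * S * G.
  have e1 : cj S * Y = \sum_(i | ~~ lo i) cj S * (c (f i) * v i 0) by rewrite /Y mulr_sumr.
  have e2 : cj Y * S = \sum_(i | ~~ lo i) cj (c (f i) * v i 0) * S.
    by rewrite /Y rmorph_sum mulr_suml.
  have e3 : cj S * S * G = \sum_(i | ~~ lo i) cj S * S * (c (f i) * cj (c (f i)) / D i).
    by rewrite /G mulr_sumr.
  rewrite e1 e2 e3 -!big_split -sumrB /=.
  apply: eq_bigr => i hi; have dp := dpos i hi.
  have D0 : D i != 0.
    apply/negP => /eqP/(congr1 (@complex.Re R)) /= h.
    by rewrite h ltxx in dp.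
  have cD : cj (D i) = D i by rewrite /D conjc_real.
  rewrite /z cjD cjdiv cD !cjM conjcK.
  by field.
rewrite eS.
have G0 : G = (\sum_(i | ~~ lo i) gq c d (f i))%:C.
  rewrite /G rmorph_sum; apply: eq_bigr => i _.
  by rewrite normc_sq /gq /D fmorph_div.
have gsl : \sum_(i | ~~ lo i) gq c d (f i) <= cd_sum K.+1 c d.
  have := gs_le hd hcv uF; by under eq_bigl do rewrite ltnNge.
have gs0 : 0 <= \sum_(i | ~~ lo i) gq c d (f i).
  apply: sumr_ge0 => i hi; rewrite /gq divr_ge0 ?sqr_ge0 //; exact/ltW/dpos.
have eSw : S = \sum_p w p 0.
  rewrite /S; have := part lo pi (fun i => v i 0) (fun _ => 1).
  under eq_bigr do rewrite mulr1; move=> ->; apply: eq_bigr => p _.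
  by rewrite mulr1 mxE.
have cs : cj S * S <= K.+1%:R * ns w.
  by rewrite eSw nsE; apply: (cs_ineq (fun p => w p 0)).
have h1 : cj S * S * G <= K.+1%:R * ns w * (cd_sum K.+1 c d)%:C.
  rewrite G0; apply: ler_pM => //; [exact: cjx_ge0 | by rewrite ler0c | by rewrite lecR].
have h2 : K.+1%:R * ns w * (cd_sum K.+1 c d)%:C <= mu%:C * ns w.
  rewrite mulrAC; apply: ler_wpM2r; first exact: ns_ge0.
  have -> : K.+1%:R * (cd_sum K.+1 c d)%:C = (K.+1%:R * cd_sum K.+1 c d)%:C.
    by rewrite rmorphM rmorph_nat.
  by rewrite lecR.
have h4 : 0 <= \sum_(i | ~~ lo i) D i * (cj (z i) * z i).
  apply: sumr_ge0 => i hi; apply: mulr_ge0; last exact: cjx_ge0.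
  by rewrite /D ler0c; exact/ltW/dpos.
rewrite addrA subr_ge0.
apply: le_trans h1 _; apply: le_trans h2 _; apply: le_trans (hq w) _.
by rewrite lerDl.
Qed.
End Core.
End L3.

Section L4.
Local Open Scope ring_scope.
Local Open Scope complex_scope.
Local Open Scope classical_set_scope.
Variable R : realType.
Local Notation C := R[i].
Local Notation cj := (@conjc R).

Lemma series_shift (u : nat -> R) l0 (e : R) : cvgn (series u) ->
  cvgn (series (fun l => u l + (if l == l0 then e else 0))) /\
  limn (series (fun l => u l + (if l == l0 then e else 0))) = limn (series u) + e.
Proof.
move=> cu.
have E : series (fun l => u l + (if l == l0 then e else 0)) =
    series u + (fun N => if (l0 < N)%N then e else 0).
  apply/funext => N; rewrite /series /= big_split /=; congr (_ + _).
  elim: N => [|N IH]; first by rewrite big_geq.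
  rewrite big_nat_recr //= IH.
  case: (ltngtP l0 N) => h.
  - by rewrite (leqW h) addr0.
  - by rewrite ltnS leqNgt h addr0.
  - by rewrite h ltnSn add0r.
have ci : (fun N => if (l0 < N)%N then e else 0) @ \oo --> e.
  apply: cvg_near_cst; exists l0.+1 => // N /= hN; by rewrite hN.
rewrite E; split; first by apply: is_cvgD => //; exact: cvgP ci.
by rewrite limD //; [rewrite (cvg_lim _ ci) | exact: cvgP ci].
Qed.


Lemma fpsd_ext (x y : infmx R) : (forall p q, (0 < p)%N -> (0 < q)%N -> x p q = y p q) ->
  formally_psd y -> formally_psd x.
Proof.
move=> e hy F uF pF; have -> : section x F = section y F; last exact: hy.
apply/matrixP => i j; rewrite !mxE e //; apply: (allP pF); exact: mem_nth.
Qed.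

Lemma qfB n (A B : 'M[C]_n) v : qf (A - B) v = qf A v - qf B v.
Proof. by rewrite /qf mulmxBr mulmxBl !mxE. Qed.

Lemma qfZ n (e : C) (A : 'M[C]_n) v : qf (e *: A) v = e * qf A v.
Proof. by rewrite /qf -scalemxAr -scalemxAl !mxE. Qed.

Lemma qf_delta n (i : 'I_n) v : qf (delta_mx i i) v = cj (v i 0) * v i 0.
Proof.
have -> : delta_mx i i = delta_mx i (0 : 'I_1) *m delta_mx 0 i :> 'M[C]_n.
  by rewrite mul_delta_mx.
rewrite /qf !mulmxA -colE -mulmxA -rowE mxE big_ord1.
by rewrite !mxE.
Qed.

Lemma qf_bm n (b : 'M[C]_n) (lam e : R) (i : 'I_n) : 0 <= e ->
  (forall v, lam%:C * ns v <= qf b v) ->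
  forall v, (lam - e)%:C * ns v <= qf (b - e%:C *: delta_mx i i) v.
Proof.
move=> e0 hb v; rewrite qfB qfZ qf_delta rmorphB mulrBl; apply: lerB => //.
apply: ler_wpM2l; first by rewrite ler0c.
rewrite nsE (bigD1 i) //= lerDl; apply: sumr_ge0 => j _; exact: cjx_ge0.
Qed.

Lemma inord_eq K p m : (0 < p <= K.+1)%N -> (0 < m <= K.+1)%N ->
  (inord p.-1 == inord m.-1 :> 'I_K.+1) = (p == m).
Proof.
move=> hp hm; rewrite -val_eqE /= !inordK; lia.
Qed.


Lemma blk_bm K (b : 'M[C]_K.+1) c d (e : R) m : (0 < m <= K.+1)%N ->
  forall p q, (0 < p)%N -> (0 < q)%N ->
  mx_sub (blockmx b c d) (mx_scale e (emx m)) p q =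
  blockmx (b - e%:C *: delta_mx (inord m.-1) (inord m.-1)) c d p q.
Proof.
move=> hm p q p0 q0; rewrite /mx_sub /mx_scale /emx /blockmx.
rewrite (negbTE (lt0n_neq0 p0)) (negbTE (lt0n_neq0 q0)) /=.
case: ifP => hp; case: ifP => hq.
- rewrite !bentryE ?p0 ?q0 // !mxE !inord_eq ?p0 ?q0 //.
  by case: (p == m); case: (q == m); rewrite /= ?mulr1 ?mulr0.
- have -> : (q == m) = false by apply/negbTE; apply/eqP; lia.
  by rewrite andbF mulr0 subr0.
- have -> : (p == m) = false by apply/negbTE; apply/eqP; lia.
  by rewrite mulr0 subr0.
- have -> : (p == m) = false by apply/negbTE; apply/eqP; lia.
  by rewrite mulr0 subr0.
Qed.

Lemma blk_dm K (b : 'M[C]_K.+1) c d (e : R) m : (K.+1 < m)%N ->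
  forall p q, (0 < p)%N -> (0 < q)%N ->
  mx_sub (blockmx b c d) (mx_scale e (emx m)) p q =
  blockmx b c (fun n => if n == m then d m - e else d n) p q.
Proof.
move=> hm p q p0 q0; rewrite /mx_sub /mx_scale /emx /blockmx.
rewrite (negbTE (lt0n_neq0 p0)) (negbTE (lt0n_neq0 q0)) /=.
case: ifP => hp.
  have -> : (p == m) = false by apply/negbTE; apply/eqP; lia.
  by case: ifP; rewrite mulr0 subr0.
case: ifP => hq.
  have -> : (q == m) = false by apply/negbTE; apply/eqP; lia.
  by rewrite andbF mulr0 subr0.
case: (eqVneq p q) => [<-|npq].
  case: (eqVneq p m) => [->|npm]; last by rewrite mulr0 subr0.
  by rewrite mulr1 rmorphB.
have -> : (p == m) && (q == m) = false by apply/negbTE; apply/nandP; case: (eqVneq p m) => [epm|]; [right; rewrite -epm eq_sym|left].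
by rewrite mulr0 subr0.
Qed.


Lemma arith (s Dm A k : R) : 0 < s -> 0 < Dm -> 0 <= A -> 0 <= k ->
  exists eps, 0 < eps /\ eps < Dm /\ k * (A / (Dm - eps) - A / Dm) < s.
Proof.
move=> s0 Dm0 A0 k0.
have kA0 : 0 <= k * A by rewrite mulr_ge0.
move: kA0; set kA := k * A => kA0.
pose u := s * Dm / (2 * (kA + 1)).
have u0 : 0 < u by rewrite /u divr_gt0 ?mulr_gt0 //; lra.
pose eps := Dm * u / (1 + u).
have e0 : 0 < eps.
  by rewrite /eps divr_gt0 //; [exact: mulr_gt0 | lra].
have eD : Dm - eps = Dm / (1 + u).
  rewrite /eps; field; lra.
have eDp : 0 < Dm - eps by rewrite eD divr_gt0 //; lra.
exists eps; split => //; split; first by lra.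
have -> : k * (A / (Dm - eps) - A / Dm) = s * (kA / (2 * (kA + 1))).
  rewrite eD /u /kA; field; rewrite -/kA.
  have sD : 0 < s * Dm by exact: mulr_gt0.
  by apply/and3P; split; apply: lt0r_neq0; lra.
rewrite -[X in _ < X]mulr1 ltr_pM2l // ltr_pdivrMr; lra.
Qed.

End L4.

Unset Implicit Arguments. Set Strict Implicit. Set Printing Implicit Defensive.
Local Open Scope ring_scope.

Theorem lemma3p3 (R : realType) (k : nat) (b : 'M[R[i]]_k)
    (c : nat -> R[i]) (d : nat -> R) :
  (0 < k)%N -> in_S b c d ->
  let a := blockmx b c d in
  (* (i) *)
  (0 <= sval_s b c d ->
     forall eps : R, 0 <= eps -> eps <= sval_s b c d ->
     forall m : nat, (0 < m)%N -> (m <= k)%N ->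
       formally_psd (mx_sub a (mx_scale eps (emx m)))) /\
  (* (ii) *)
  (0 <= sval_s b c d -> formally_psd a) /\
  (* (iii) *)
  (0 < sval_s b c d ->
     forall m : nat, (0 < m)%N ->
       exists eps : R, 0 < eps /\
         (exists (b' : 'M[R[i]]_k) (c' : nat -> R[i]) (d' : nat -> R),
            block_data b' c' d' /\
            (forall p q, (0 < p)%N -> (0 < q)%N ->
               blockmx b' c' d' p q = mx_sub a (mx_scale eps (emx m)) p q) /\
            0 < sval_s b' c' d') /\
         formally_psd (mx_sub a (mx_scale eps (emx m)))).
Proof.
case: k b => [|K] b k0 //.
move=> [hb [hd hcv]] a.
have ray := rayleigh hb.
have partI : 0 <= sval_s b c d -> forall eps, 0 <= eps -> eps <= sval_s b c d ->
    forall m, (0 < m)%N -> (m <= K.+1)%N ->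
    formally_psd (mx_sub a (mx_scale eps (emx m))).
  move=> _ eps e0 es m m0 mK.
  have hm : (0 < m <= K.+1)%N by rewrite m0 mK.
  apply: fpsd_ext (blk_bm b c d eps hm) _.
  apply: (core (mu := lambda_min b - eps)) => //; last exact: qf_bm.
  by move: es; rewrite /sval_s; lra.
split => //; split.
  move=> s0; apply: (core (mu := lambda_min b)) => //.
  by move: s0; rewrite /sval_s; lra.
move=> s0 m m0; case: (leqP m K.+1) => mK.
  have hm : (0 < m <= K.+1)%N by rewrite m0 mK.
  pose eps := sval_s b c d / 2.
  have e0 : 0 < eps by rewrite divr_gt0.
  exists eps; split => //; split; last first.
    by apply: (partI (ltW s0) eps (ltW e0)) => //; rewrite /eps; lra.
  exists (b - (eps%:C)%C *: delta_mx (inord m.-1) (inord m.-1)), c, d.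
  split; first exact: (conj hd hcv).
  split.
    by move=> p q p0 q0; symmetry; exact: (blk_bm b c d eps hm).
  have := lam_lb (qf_bm (inord m.-1) (ltW e0) ray).
  move=> h; have epsE : eps = sval_s b c d / 2 by [].
  clearbody eps; move: s0 h epsE; rewrite /sval_s.
  move: (lambda_min (b - _)) => L'; move: (lambda_min b) => L.
  move: (cd_sum _ _ _) => T.
  lra.
have Dm0 : 0 < d m by apply: hd.
set A := (ComplexField.Normc.normc (c m)) ^+ 2.
have A0 : 0 <= A by rewrite /A sqr_ge0.
have [eps [e0 [eD kdel]]] := arith s0 Dm0 A0 (ler0n _ K.+1).
have eDp : 0 < d m - eps by rewrite subr_gt0.
pose del := A / (d m - eps) - A / d m.
pose d' := fun n => if n == m then d m - eps else d n.
pose l0 := (m - K.+2)%N.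
have cdE : cd_seq K.+1 c d' =
    (fun l => cd_seq K.+1 c d l + (if l == l0 then del else 0)).
  apply/funext => l; rewrite /cd_seq /d'.
  case: (eqVneq l l0) => [->|nl].
    have -> : (K.+1 + l0.+1)%N = m by rewrite /l0; lia.
    by rewrite eqxx /del -/A addrCA subrr addr0.
  have -> : (K.+1 + l.+1 == m) = false by apply/negbTE/eqP; rewrite /l0 in nl; lia.
  by rewrite addr0.
have [cv' lim'] := series_shift l0 del hcv.
have hd' : forall n, (K.+1 < n)%N -> 0 < d' n.
  by move=> n hn; rewrite /d'; case: ifP => _; [exact: eDp | exact: hd].
have cv'' : cvgn (series (cd_seq K.+1 c d')) by rewrite cdE.
have sum' : cd_sum K.+1 c d' = cd_sum K.+1 c d + del by rewrite /cd_sum cdE lim'.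
have key : 0 < lambda_min b - K.+1%:R * cd_sum K.+1 c d'.
  rewrite sum' mulrDr; have h1 := kdel; have h2 := s0; rewrite -/del in h1.
  rewrite /sval_s in h1 h2; move: h1 h2.
  move: (lambda_min b) (K.+1%:R * cd_sum K.+1 c d) (K.+1%:R * del) => L x y; lra.
exists eps; split => //; split.
  exists b, c, d'; split; first exact: (conj hd' cv'').
  split; last exact: key.
  by move=> p q p0 q0; symmetry; exact: (blk_dm b c d eps mK).
apply: fpsd_ext (blk_dm b c d eps mK) _.
apply: (core (mu := lambda_min b)) => //.
move: key; move: (lambda_min b) (cd_sum _ _ _) => L T; lra.
Qed.
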